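(* Let $(x_n)$ be generated by (HPPA). Assume there are monotone functions ${\rm a},{\rm A},{\rm b},{\rm B},{\rm E}:\mathbb{N}\to\mathbb{N}$ satisfying (Q1), (Q2), (Q3'), (Q3), (Q4) respectively. Let $\mathcal{E},\mathcal{D}\in\mathbb{N}$ satisfy $\mathcal{E}\geq 1+\sum_{i=0}^{{\rm E}(0)}\|e_i\|$ and $\mathcal{D}\geq\|x_0-p\|$ for some $p\in S$, and set $N:=\max\{2\mathcal{D},\mathcal{D}+\mathcal{E}\}$. Then for every $k\in\mathbb{N}$ and every monotone $f:\mathbb{N}\to\mathbb{N}$, $$\exists n\leq\Phi_1(k,f)\ \forall i,j\in[n,f(n)]\ \left(\|x_i-x_j\|\leq\frac{1}{k+1}\right),$$ where $\Phi_1(k,f):=\sigma_1(\tilde k,g(\Delta))$ and: $\sigma_1(k',n'):={\rm A}\big(n'+\lceil\ln(16N^2(k'+1))\rceil\big)+1$; $\tilde k:=4(k+1)^2-1$; $g(m):=\max\{m,\ {\rm E}(16(1+4N)(k+1)^2-1)+1\}$; $h_f(m):=(1+4N)\big(16(k+1)^2(f(\sigma_1(\tilde k,g(m)))+1)+1\big)-1$; $\Delta:=\Psi(32(k+1)^2-1,\,h_f)$, where for $k'\in\mathbb{N}$ and monotone $u:\mathbb{N}\to\mathbb{N}$, $\Psi(k',u):=\chi_1\big(24N(w_{\hat\nu_u,N}^{(R)}(0)+1)^2\big)$ with $R:=4N^4(k'+1)^2$, $\nu_u(m):=\max\{2,{\rm b}(u(m))\}(u(m)+1)-1$, $\hat\nu_u(m):=\nu_u(\chi_1(m))$,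 $w_{v,N}(m):=\max\{v(24N(m+1)^2),24N(m+1)^2\}$, $\xi(k''):=\max\{{\rm a}(2(2\mathcal{D}+\mathcal{E})(k''+1)-1),{\rm E}(2k''+1)+1\}$ and $\chi_1(k''):=\max\{\xi(4k''+3),{\rm B}(8(\mathcal{D}+\mathcal{E})(k''+1)-1)\}+1$.
   Context: $X$ is a real Hilbert space, $\mathsf{A}:X\to 2^X$ a maximal monotone operator with zero set $S=\{x:0\in\mathsf{A}(x)\}$, assumed nonempty. For $\beta>0$, $J_\beta:=(Id+\beta\mathsf{A})^{-1}$ is the resolvent, a single-valued nonexpansive map with fixed point set $S$. Given $(\alpha_n)\subset\,]0,1[$, $(\beta_n)\subset(0,\infty)$, $(e_n)\subset X$, $x_0\in X$, (HPPA) is the sequence $x_{n+1}:=\alpha_n x_0+(1-\alpha_n)(J_{\beta_n}(x_n)+e_n)$. (Q1): $\forall k\,\forall n\geq{\rm a}(k)\ \alpha_n\leq\frac{1}{k+1}$. (Q2): $\forall k\ \sum_{i=0}^{{\rm A}(k)}\alpha_i\geq k$. (Q3'): $\forall n\ \beta_n\leq{\rm b}(n)$. (Q3): $\forall k\,\forall n\geq{\rm B}(k)\ \beta_n\geq k$. (Q4): $\forall k\,\forall n\ \sum_{i={\rm E}(k)+1}^{{\rm E}(k)+n}\|e_i\|\leq\frac{1}{k+1}$. Monotone means nondecreasing. $v^{(R)}$ is the $R$-fold composition of $v$ ($v^{(0)}$ the identity). $[a,b]$ is the set of naturals $m$ with $a\le m\le b$. *)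

(* Defs.v *)
From Stdlib Require Import Reals Lra Lia ZArith.
Open Scope R_scope.

Record RHilbert : Type := {
  car :> Type;
  hzero : car;
  hadd : car -> car -> car;
  hopp : car -> car;
  hscal : R -> car -> car;
  hinner : car -> car -> R;
  hadd_assoc : forall x y z, hadd x (hadd y z) = hadd (hadd x y) z;
  hadd_comm : forall x y, hadd x y = hadd y x;
  hadd_0 : forall x, hadd x hzero = x;
  hadd_opp : forall x, hadd x (hopp x) = hzero;
  hscal_assoc : forall a b x, hscal a (hscal b x) = hscal (a * b) x;
  hscal_1 : forall x, hscal 1 x = x;
  hscal_distr_vec : forall a x y, hscal a (hadd x y) = hadd (hscal a x) (hscal a y);
  hscal_distr_sc : forall a b x, hscal (a + b) x = hadd (hscal a x) (hscal b x);
  hinner_sym : forall x y, hinner x y = hinner y x;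
  hinner_add_l : forall x y z, hinner (hadd x y) z = hinner x z + hinner y z;
  hinner_scal_l : forall a x y, hinner (hscal a x) y = a * hinner x y;
  hinner_pos : forall x, 0 <= hinner x x;
  hinner_def : forall x, hinner x x = 0 -> x = hzero;
  hcomplete : forall u : nat -> car,
    (forall eps, 0 < eps -> exists M, forall m n, (M <= m)%nat -> (M <= n)%nat ->
        sqrt (hinner (hadd (u m) (hopp (u n))) (hadd (u m) (hopp (u n)))) < eps) ->
    exists l, forall eps, 0 < eps -> exists M, forall n, (M <= n)%nat ->
        sqrt (hinner (hadd (u n) (hopp l)) (hadd (u n) (hopp l))) < eps
}.

Arguments hzero {_}. Arguments hadd {_}. Arguments hopp {_}.
Arguments hscal {_}. Arguments hinner {_}.

Definition hsub {X : RHilbert} (x y : X) : X := hadd x (hopp y).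
Definition hnorm {X : RHilbert} (x : X) : R := sqrt (hinner x x).

(** Set-valued operators as graphs: [Aop x u] means u ∈ A(x). *)
Definition monotone_op {X : RHilbert} (Aop : X -> X -> Prop) : Prop :=
  forall x u y v, Aop x u -> Aop y v -> 0 <= hinner (hsub x y) (hsub u v).

Definition maximal_monotone {X : RHilbert} (Aop : X -> X -> Prop) : Prop :=
  monotone_op Aop /\
  forall x u, (forall y v, Aop y v -> 0 <= hinner (hsub x y) (hsub u v)) -> Aop x u.

(** [J] is the resolvent family of [Aop]: J_beta(x) = (Id + beta A)^{-1}(x),
    i.e. x ∈ J_beta x + beta A(J_beta x), i.e. (x - J_beta x)/beta ∈ A(J_beta x).
    For monotone A this determines J_beta(x) uniquely. *)
Definition is_resolvent {X : RHilbert} (Aop : X -> X -> Prop) (J : R -> X -> X) : Prop :=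
  forall beta x, 0 < beta -> Aop (J beta x) (hscal (/ beta) (hsub x (J beta x))).

Definition HPPA {X : RHilbert} (J : R -> X -> X) (alpha beta : nat -> R)
  (e : nat -> X) (x0 : X) (x : nat -> X) : Prop :=
  x 0%nat = x0 /\
  forall n, x (S n) = hadd (hscal (alpha n) x0)
                         (hscal (1 - alpha n) (hadd (J (beta n) (x n)) (e n))).

Fixpoint rsum (f : nat -> R) (s n : nat) : R :=
  match n with
  | O => 0
  | S n' => rsum f s n' + f (s + n')%nat
  end.

Definition nat_monotone (f : nat -> nat) : Prop :=
  forall m n, (m <= n)%nat -> (f m <= f n)%nat.

(** ceiling of a real, as a natural number (truncated at 0). *)
Definition ceil_nat (r : R) : nat := Z.to_nat (- Int_part (- r)).

Section Rates.
Local Open Scope nat_scope.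
Variables (a Afn b B E : nat -> nat) (Dc Ec : nat).

Definition Ncal : nat := Nat.max (2 * Dc) (Dc + Ec).

Definition sigma1 (k' n' : nat) : nat :=
  (Afn (n' + ceil_nat (ln (16 * INR Ncal ^ 2 * INR (k' + 1))%R)) + 1).

Definition xi (k'' : nat) : nat :=
  Nat.max (a (2 * (2 * Dc + Ec) * (k'' + 1) - 1)) (E (2 * k'' + 1) + 1).

Definition chi1 (k'' : nat) : nat :=
  (Nat.max (xi (4 * k'' + 3)) (B (8 * (Dc + Ec) * (k'' + 1) - 1)) + 1)%nat.

Definition nu (u : nat -> nat) (m : nat) : nat :=
  (Nat.max 2 (b (u m)) * (u m + 1) - 1)%nat.

Definition nuhat (u : nat -> nat) (m : nat) : nat := nu u (chi1 m).

Definition wfun (v : nat -> nat) (NN : nat) (m : nat) : nat :=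
  Nat.max (v (24 * NN * (m + 1) ^ 2)) (24 * NN * (m + 1) ^ 2).

Definition Psi (k' : nat) (u : nat -> nat) : nat :=
  let R0 := (4 * Ncal ^ 4 * (k' + 1) ^ 2)%nat in
  chi1 (24 * Ncal * (Nat.iter R0 (wfun (nuhat u) Ncal) 0%nat + 1) ^ 2).

Definition ktilde (k : nat) : nat := (4 * (k + 1) ^ 2 - 1)%nat.

Definition gfun (k m : nat) : nat :=
  Nat.max m (E (16 * (1 + 4 * Ncal) * (k + 1) ^ 2 - 1) + 1).

Definition hfun (k : nat) (f : nat -> nat) (m : nat) : nat :=
  ((1 + 4 * Ncal) * (16 * (k + 1) ^ 2 * (f (sigma1 (ktilde k) (gfun k m)) + 1) + 1) - 1)%nat.

Definition Delta (k : nat) (f : nat -> nat) : nat :=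
  Psi (32 * (k + 1) ^ 2 - 1) (hfun k f).

Definition Phi1 (k : nat) (f : nat -> nat) : nat :=
  sigma1 (ktilde k) (gfun k (Delta k f)).

End Rates.

(* Main.v *)
Require Import Defs.
From Stdlib Require Import Reals Lra Lia Psatz ZArith Classical.
Open Scope R_scope.

Section Hil.
Context {X : RHilbert}.
Implicit Types x y z u v w : X.

Lemma ip_add_r x y z : hinner x (hadd y z) = hinner x y + hinner x z.
Proof. rewrite !(hinner_sym _ x), hinner_add_l; reflexivity. Qed.
Lemma ip_scal_r a x y : hinner x (hscal a y) = a * hinner x y.
Proof. rewrite !(hinner_sym _ x), hinner_scal_l; reflexivity. Qed.
Lemma ip_zero_l y : hinner (@hzero X) y = 0.
Proof.
  assert (H := hinner_add_l X hzero hzero y). rewrite hadd_0 in H. lra.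
Qed.
Lemma ip_zero_r y : hinner y (@hzero X) = 0.
Proof. rewrite hinner_sym; apply ip_zero_l. Qed.
Lemma ip_opp_l x y : hinner (hopp x) y = - hinner x y.
Proof.
  assert (H := hinner_add_l X x (hopp x) y). rewrite hadd_opp, ip_zero_l in H. lra.
Qed.
Lemma ip_opp_r x y : hinner x (hopp y) = - hinner x y.
Proof. rewrite !(hinner_sym _ x), ip_opp_l; reflexivity. Qed.
End Hil.

Ltac hexp := unfold hsub in *; repeat rewrite ?hinner_add_l, ?ip_add_r, ?hinner_scal_l,
   ?ip_scal_r, ?ip_opp_l, ?ip_opp_r, ?ip_zero_l, ?ip_zero_r.
Ltac hsym := repeat match goal with
 | |- context [hinner ?a ?b] => match goal with |- context [hinner b a] =>
        tryif (constr_eq a b) then fail else rewrite (hinner_sym _ b a) end end.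
Ltac hring := hexp; hsym; rewrite ?Rinv_1; ring.

Section Hil2.
Context {X : RHilbert}.
Implicit Types x y z u v w : X.

Lemma hnorm_nonneg x : 0 <= hnorm x.
Proof. apply sqrt_pos. Qed.
Lemma hnorm_sq x : hnorm x * hnorm x = hinner x x.
Proof. apply sqrt_sqrt, hinner_pos. Qed.

Lemma CS_sq x y : hinner x y * hinner x y <= hinner x x * hinner y y.
Proof.
  destruct (Req_dec (hinner y y) 0) as [H0|H0].
  - apply hinner_def in H0. subst. rewrite !ip_zero_r. lra.
  - assert (P := hinner_pos X (hsub (hscal (hinner y y) x) (hscal (hinner x y) y))).
    assert (Hy := hinner_pos X y).
    assert (E1 : hinner (hsub (hscal (hinner y y) x) (hscal (hinner x y) y))
                        (hsub (hscal (hinner y y) x) (hscal (hinner x y) y))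
      = hinner y y * (hinner y y * hinner x x - hinner x y * hinner x y)).
    { hexp. rewrite (hinner_sym _ y x). ring. }
    rewrite E1 in P. nra.
Qed.

Lemma CS x y : hinner x y <= hnorm x * hnorm y.
Proof.
  pose proof (CS_sq x y). pose proof (hnorm_sq x). pose proof (hnorm_sq y).
  pose proof (hnorm_nonneg x). pose proof (hnorm_nonneg y).
  assert (0 <= hnorm x * hnorm y) by nra.
  destruct (Rle_dec (hinner x y) 0). nra.
  nra.
Qed.

Lemma norm_le w c : 0 <= c -> hinner w w <= c * c -> hnorm w <= c.
Proof.
  intros Hc H. pose proof (hnorm_sq w). pose proof (hnorm_nonneg w). nra.
Qed.

Lemma tri_gen (a b W : X) : hinner W W = hinner a a + 2 * hinner a b + hinner b b ->
  hnorm W <= hnorm a + hnorm b.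
Proof.
  intros E. apply norm_le. pose proof (hnorm_nonneg a). pose proof (hnorm_nonneg b). lra.
  rewrite E. pose proof (CS a b). pose proof (hnorm_sq a). pose proof (hnorm_sq b). nra.
Qed.

Lemma hdist_tri u v w : hnorm (hsub u w) <= hnorm (hsub u v) + hnorm (hsub v w).
Proof. apply tri_gen. hring. Qed.

Lemma hdist_sym u v : hnorm (hsub u v) = hnorm (hsub v u).
Proof. unfold hnorm. f_equal. hring. Qed.

Lemma add_tri y e p : hnorm (hsub (hadd y e) p) <= hnorm (hsub y p) + hnorm e.
Proof. apply tri_gen. hring. Qed.



Lemma conv_norm a u v p : 0 <= a <= 1 ->
  hnorm (hsub (hadd (hscal a u) (hscal (1 - a) v)) p)
    <= a * hnorm (hsub u p) + (1 - a) * hnorm (hsub v p).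
Proof.
  intros Ha. apply norm_le.
  pose proof (hnorm_nonneg (hsub u p)). pose proof (hnorm_nonneg (hsub v p)). nra.
  assert (E : hinner (hsub (hadd (hscal a u) (hscal (1 - a) v)) p)
                     (hsub (hadd (hscal a u) (hscal (1 - a) v)) p)
    = a * a * hinner (hsub u p) (hsub u p) + 2 * a * (1 - a) * hinner (hsub u p) (hsub v p)
      + (1 - a) * (1 - a) * hinner (hsub v p) (hsub v p)) by hring.
  rewrite E. pose proof (CS (hsub u p) (hsub v p)).
  pose proof (hnorm_sq (hsub u p)). pose proof (hnorm_sq (hsub v p)).
  assert (0 <= a * (1 - a)) by nra. nra.
Qed.
End Hil2.


Section Conv.
Context {X : RHilbert}.
Implicit Types x y z u v w : X.

Lemma xu_step a x0 v z : 0 <= a <= 1 ->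
  hinner (hsub (hadd (hscal a x0) (hscal (1 - a) v)) z) (hsub (hadd (hscal a x0) (hscal (1 - a) v)) z)
  <= (1 - a) * (1 - a) * hinner (hsub v z) (hsub v z)
     + 2 * a * hinner (hsub x0 z) (hsub (hadd (hscal a x0) (hscal (1 - a) v)) z).
Proof.
  intros Ha.
  assert (E : hinner (hsub (hadd (hscal a x0) (hscal (1 - a) v)) z) (hsub (hadd (hscal a x0) (hscal (1 - a) v)) z)
   = (1 - a) * (1 - a) * hinner (hsub v z) (hsub v z)
     + 2 * a * hinner (hsub x0 z) (hsub (hadd (hscal a x0) (hscal (1 - a) v)) z)
     - a * a * hinner (hsub x0 z) (hsub x0 z)) by hring.
  rewrite E. pose proof (hinner_pos X (hsub x0 z)). nra.
Qed.

Lemma proj_ident lam x0 y z :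
  hinner (hsub x0 (hadd (hscal lam y) (hscal (1 - lam) z))) (hsub x0 (hadd (hscal lam y) (hscal (1 - lam) z)))
  = hinner (hsub x0 z) (hsub x0 z) - 2 * lam * hinner (hsub x0 z) (hsub y z)
    + lam * lam * hinner (hsub y z) (hsub y z).
Proof. hring. Qed.

Lemma conv_ident lam y z w :
  hinner (hsub (hadd (hscal lam y) (hscal (1 - lam) z)) w) (hsub (hadd (hscal lam y) (hscal (1 - lam) z)) w)
  = lam * hinner (hsub y w) (hsub y w) + (1 - lam) * hinner (hsub z w) (hsub z w)
    - lam * (1 - lam) * hinner (hsub y z) (hsub y z).
Proof. hring. Qed.

Lemma zc_norm lam y z : 0 <= lam <= 1 ->
  hnorm (hsub z (hadd (hscal lam y) (hscal (1 - lam) z))) <= lam * hnorm (hsub y z).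
Proof.
  intros H. apply norm_le. pose proof (hnorm_nonneg (hsub y z)). nra.
  assert (E : hinner (hsub z (hadd (hscal lam y) (hscal (1 - lam) z))) (hsub z (hadd (hscal lam y) (hscal (1 - lam) z)))
    = lam * lam * hinner (hsub y z) (hsub y z)) by hring.
  rewrite E, <- (hnorm_sq (hsub y z)). nra.
Qed.

Lemma yc_norm lam y z : 0 <= lam <= 1 ->
  hnorm (hsub y (hadd (hscal lam y) (hscal (1 - lam) z))) <= (1 - lam) * hnorm (hsub y z).
Proof.
  intros H. apply norm_le. pose proof (hnorm_nonneg (hsub y z)). nra.
  assert (E : hinner (hsub y (hadd (hscal lam y) (hscal (1 - lam) z))) (hsub y (hadd (hscal lam y) (hscal (1 - lam) z)))
    = (1 - lam) * (1 - lam) * hinner (hsub y z) (hsub y z)) by hring.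
  rewrite E, <- (hnorm_sq (hsub y z)). nra.
Qed.
End Conv.

Section Res.
Context {X : RHilbert}.
Variable Aop : X -> X -> Prop.
Variable J : R -> X -> X.
Hypothesis Hmon : monotone_op Aop.
Hypothesis HJ : is_resolvent Aop J.

Lemma sq_le_lin t c : 0 <= t -> 0 <= c -> t * t <= t * c -> t <= c.
Proof. intros. nra. Qed.

Lemma J_nonexp bt x y : 0 < bt -> hnorm (hsub (J bt x) (J bt y)) <= hnorm (hsub x y).
Proof.
  intros Hb. set (u1 := J bt x). set (u2 := J bt y).
  pose proof (Hmon _ _ _ _ (HJ bt x Hb) (HJ bt y Hb)) as M. fold u1 u2 in M.
  assert (E : hinner (hsub u1 u2) (hsub (hscal (/ bt) (hsub x u1)) (hscal (/ bt) (hsub y u2)))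
     = / bt * (hinner (hsub u1 u2) (hsub x y) - hinner (hsub u1 u2) (hsub u1 u2))) by hring.
  rewrite E in M. assert (0 < / bt) by (apply Rinv_0_lt_compat; lra).
  pose proof (CS (hsub u1 u2) (hsub x y)).
  rewrite <- (hnorm_sq (hsub u1 u2)) in M.
  apply sq_le_lin. apply hnorm_nonneg. apply hnorm_nonneg. nra.
Qed.

Lemma J_toward bt x p : Aop p hzero -> 0 < bt -> hnorm (hsub (J bt x) p) <= hnorm (hsub x p).
Proof.
  intros Hp Hb. set (u := J bt x).
  pose proof (Hmon _ _ _ _ (HJ bt x Hb) Hp) as M. fold u in M.
  assert (E : hinner (hsub u p) (hsub (hscal (/ bt) (hsub x u)) hzero)
     = / bt * (hinner (hsub u p) (hsub x p) - hinner (hsub u p) (hsub u p))) by hring.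
  rewrite E in M. assert (0 < / bt) by (apply Rinv_0_lt_compat; lra).
  pose proof (CS (hsub u p) (hsub x p)).
  rewrite <- (hnorm_sq (hsub u p)) in M.
  apply sq_le_lin. apply hnorm_nonneg. apply hnorm_nonneg. nra.
Qed.

Lemma J_small y v bt : Aop y v -> 0 < bt -> hnorm (hsub y (J bt y)) <= bt * hnorm v.
Proof.
  intros Hy Hb. set (u := J bt y).
  pose proof (Hmon _ _ _ _ (HJ bt y Hb) Hy) as M. fold u in M.
  assert (E : hinner (hsub u y) (hsub (hscal (/ bt) (hsub y u)) v)
     = - / bt * hinner (hsub y u) (hsub y u) - hinner (hsub u y) v) by hring.
  rewrite E in M. assert (0 < / bt) by (apply Rinv_0_lt_compat; lra).
  assert (E2 : hinner (hsub u y) v = - hinner (hsub y u) v) by hring.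
  rewrite E2 in M.
  pose proof (CS (hsub y u) v).
  rewrite <- (hnorm_sq (hsub y u)) in M.
  apply sq_le_lin. apply hnorm_nonneg. pose proof (hnorm_nonneg v); nra.
  assert (hnorm (hsub y u) * hnorm (hsub y u) <= bt * hinner (hsub y u) v).
  { apply (Rmult_le_compat_l bt) in M; [|lra].
    replace (bt * (- / bt * (hnorm (hsub y u) * hnorm (hsub y u)) - - hinner (hsub y u) v))
      with (- (hnorm (hsub y u) * hnorm (hsub y u)) + bt * hinner (hsub y u) v) in M
      by (field; lra). lra. }
  nra.
Qed.

Lemma J_beta1 y bt : 0 < bt ->
  hnorm (hsub y (J bt y)) <= Rmax 1 bt * hnorm (hsub y (J 1 y)).
Proof.
  intros Hb. set (u := J bt y). set (u1 := J 1 y).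
  pose proof (Hmon _ _ _ _ (HJ bt y Hb) (HJ 1 y Rlt_0_1)) as M. fold u u1 in M.
  assert (E : hinner (hsub u u1) (hsub (hscal (/ bt) (hsub y u)) (hscal (/ 1) (hsub y u1)))
     = / bt * hinner (hsub y u) (hsub y u1) - hinner (hsub y u1) (hsub y u1)
       - / bt * hinner (hsub y u) (hsub y u) + hinner (hsub y u) (hsub y u1)) by (hexp; hsym; rewrite ?Rinv_1; ring). 
  rewrite E in M. clear E.
  pose proof (CS (hsub y u) (hsub y u1)).
  rewrite <- (hnorm_sq (hsub y u)), <- (hnorm_sq (hsub y u1)) in M.
  set (A := hnorm (hsub y u)) in *. set (C := hnorm (hsub y u1)) in *.
  set (P := hinner (hsub y u) (hsub y u1)) in *.
  assert (HA : 0 <= A) by apply hnorm_nonneg. assert (HC : 0 <= C) by apply hnorm_nonneg.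
  assert (M2 : A * A + bt * (C * C) <= (1 + bt) * P).
  { apply (Rmult_le_compat_l bt) in M; [|lra].
    replace (bt * (/ bt * P - C * C - / bt * (A * A) + P)) with
      (P - bt * (C * C) - A * A + bt * P) in M by (field; lra). lra. }
  assert (M3 : A * A + bt * (C * C) <= (1 + bt) * (A * C)) by nra.
  destruct (Rle_dec A (Rmax 1 bt * C)) as [h|h]; auto.
  exfalso. assert (A > C) by (pose proof (Rmax_l 1 bt); nra).
  assert (A > bt * C) by (pose proof (Rmax_r 1 bt); nra).
  nra.
Qed.

Lemma approx_conv lam y z dl : 0 <= lam <= 1 ->
  hnorm (hsub y (J 1 y)) <= dl -> hnorm (hsub z (J 1 z)) <= dl ->
  let c := hadd (hscal lam y) (hscal (1 - lam) z) in
  hinner (hsub c (J 1 c)) (hsub c (J 1 c)) <= dl * dl + dl * hnorm (hsub y z).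
Proof.
  intros Hl Hy Hz c. set (w := J 1 c).
  assert (Y : hnorm (hsub y w) <= dl + (1 - lam) * hnorm (hsub y z)).
  { pose proof (hdist_tri y (J 1 y) w). pose proof (J_nonexp 1 y c Rlt_0_1).
    pose proof (yc_norm lam y z Hl). fold c in H1. fold w in H0. lra. }
  assert (Z : hnorm (hsub z w) <= dl + lam * hnorm (hsub y z)).
  { pose proof (hdist_tri z (J 1 z) w). pose proof (J_nonexp 1 z c Rlt_0_1).
    pose proof (zc_norm lam y z Hl). fold c in H1. fold w in H0. lra. }
  unfold c. rewrite conv_ident. fold c. fold w.
  rewrite <- (hnorm_sq (hsub y w)), <- (hnorm_sq (hsub z w)), <- (hnorm_sq (hsub y z)).
  pose proof (hnorm_nonneg (hsub y w)). pose proof (hnorm_nonneg (hsub z w)).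
  pose proof (hnorm_nonneg (hsub y z)).
  assert (dl >= 0) by (pose proof (hnorm_nonneg (hsub y (J 1 y))); lra).
  set (d := hnorm (hsub y z)) in *.
  assert (hnorm (hsub y w) * hnorm (hsub y w) <= (dl + (1 - lam) * d) * (dl + (1 - lam) * d)) by nra.
  assert (hnorm (hsub z w) * hnorm (hsub z w) <= (dl + lam * d) * (dl + lam * d)) by nra.
  assert (4 * lam * (1 - lam) <= 1) by (pose proof (Rle_0_sqr (2*lam-1)); unfold Rsqr in *; lra).
  assert (dl * d * (4 * lam * (1 - lam)) <= dl * d) by (assert (0 <= dl * d) by nra; nra).
  assert (lam * (hnorm (hsub y w) * hnorm (hsub y w)) <= lam * ((dl + (1 - lam) * d) * (dl + (1 - lam) * d))) by (apply Rmult_le_compat_l; lra).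
  assert ((1 - lam) * (hnorm (hsub z w) * hnorm (hsub z w)) <= (1 - lam) * ((dl + lam * d) * (dl + lam * d))) by (apply Rmult_le_compat_l; lra).
  nra.
Qed.
End Res.

Lemma rsum_split f s n m : rsum f s (n + m) = rsum f s n + rsum f (s + n) m.
Proof.
  induction m as [|m IH]; simpl.
  - rewrite Nat.add_0_r. lra.
  - rewrite Nat.add_succ_r. simpl. rewrite IH. replace (s + (n + m))%nat with (s + n + m)%nat by lia. lra.
Qed.

Lemma rsum_nonneg f s n : (forall i, 0 <= f i) -> 0 <= rsum f s n.
Proof. intros H; induction n; simpl; [lra|]. specialize (H (s+n)%nat). lra. Qed.

Lemma rsum_le f g s n : (forall i, (s <= i < s + n)%nat -> f i <= g i) -> rsum f s n <= rsum g s n.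
Proof.
  intros H; induction n; simpl; [lra|].
  assert (f (s+n)%nat <= g (s+n)%nat) by (apply H; lia).
  assert (rsum f s n <= rsum g s n) by (apply IHn; intros; apply H; lia). lra.
Qed.

Lemma rsum_const c s n : rsum (fun _ => c) s n = INR n * c.
Proof. induction n; simpl rsum; [simpl; lra|]. rewrite IHn, S_INR. lra. Qed.

Lemma sum_f_R0_rsum f n : sum_f_R0 f n = rsum f 0 (S n).
Proof. induction n; simpl; [lra|]. simpl in IHn. rewrite IHn. reflexivity. Qed.

Lemma rsum_mono_len f s n m : (forall i, 0 <= f i) -> (n <= m)%nat -> rsum f s n <= rsum f s m.
Proof.
  intros H Hnm. replace m with (n + (m - n))%nat by lia. rewrite rsum_split.
  pose proof (rsum_nonneg f (s+n) (m-n) H). lra.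
Qed.

Lemma rsum_single f s n i : (forall i, 0 <= f i) -> (s <= i < s + n)%nat -> f i <= rsum f s n.
Proof.
  intros H Hi. apply Rle_trans with (rsum f s (S (i - s))).
  - simpl. replace (s + (i - s))%nat with i by lia. pose proof (rsum_nonneg f s (i - s) H). lra.
  - apply rsum_mono_len; auto; lia.
Qed.

Lemma rsum_shift_le f s0 s n : (forall i, 0 <= f i) -> (s0 <= s)%nat ->
  rsum f s n <= rsum f s0 (s - s0 + n).
Proof.
  intros H Hs. rewrite rsum_split. replace (s0 + (s - s0))%nat with s by lia.
  pose proof (rsum_nonneg f s0 (s - s0) H). lra.
Qed.

Fixpoint rprod (f : nat -> R) (s n : nat) : R :=
  match n with O => 1 | S n' => rprod f s n' * f (s + n')%nat end.

Lemma rprod_exp al s n : (forall i, 0 <= al i <= 1) ->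
  0 <= rprod (fun i => 1 - al i) s n <= exp (- rsum al s n).
Proof.
  intros H. induction n; simpl.
  - rewrite Ropp_0, exp_0. lra.
  - specialize (H (s + n)%nat). pose proof (exp_ineq1_le (- al (s+n)%nat)).
    replace (- (rsum al s n + al (s + n)%nat)) with (- rsum al s n + - al (s+n)%nat) by ring.
    rewrite exp_plus. pose proof (exp_pos (- rsum al s n)). nra.
Qed.

Lemma xu_lemma (sq al gm : nat -> R) (r : R) n0 m :
  (forall i, 0 <= al i <= 1) -> 0 <= r -> (forall i, 0 <= gm i) ->
  (forall i, (n0 <= i < n0 + m)%nat -> sq (S i) <= (1 - al i) * sq i + al i * r + gm i) ->
  sq (n0 + m)%nat <= rprod (fun i => 1 - al i) n0 m * sq n0 + r + rsum gm n0 m.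
Proof.
  intros Ha Hr Hg Hs. induction m.
  - simpl. rewrite Nat.add_0_r. lra.
  - rewrite Nat.add_succ_r. simpl rprod. simpl rsum.
    assert (IH : sq (n0 + m)%nat <= rprod (fun i => 1 - al i) n0 m * sq n0 + r + rsum gm n0 m)
      by (apply IHm; intros; apply Hs; lia).
    assert (S1 := Hs (n0 + m)%nat ltac:(lia)).
    specialize (Ha (n0 + m)%nat). pose proof (rsum_nonneg gm n0 m Hg).
    assert ((1 - al (n0+m)%nat) * sq (n0 + m)%nat <= (1 - al (n0+m)%nat) * (rprod (fun i => 1 - al i) n0 m * sq n0 + r + rsum gm n0 m))
      by (apply Rmult_le_compat_l; lra).
    nra.
Qed.

Lemma ceil_nat_ge r : r <= INR (ceil_nat r).
Proof.
  unfold ceil_nat. destruct (base_Int_part (- r)) as [H1 _].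
  set (z := Int_part (- r)) in *.
  destruct (Z_le_gt_dec 0 (- z)) as [Hz|Hz].
  - rewrite INR_IZR_INZ, Z2Nat.id by lia. rewrite opp_IZR. lra.
  - assert (IZR (- z) < 0) by (apply IZR_lt; lia). rewrite opp_IZR in H.
    pose proof (pos_INR (Z.to_nat (- z))). lra.
Qed.

Lemma rsum_lin (c d : R) g s n : rsum (fun i => c * (d + g i)) s n = c * (INR n * d + rsum g s n).
Proof. induction n; simpl rsum; [simpl; ring|]. rewrite IHn, S_INR. ring. Qed.

Lemma chain {T : Type} (Zs : nat -> T -> Prop) (phi : T -> R) (W : nat -> nat)
  (R0 : nat) (eps c0 : R) (p : T) :
  (forall K, Zs K p) -> phi p <= c0 -> (forall y, 0 <= phi y) -> c0 < INR R0 * eps ->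
  exists j, (j < R0)%nat /\ exists z, Zs (W (Nat.iter j W 0%nat)) z /\
     forall y, Zs (Nat.iter j W 0%nat) y -> phi z <= phi y + eps.
Proof.
  intros Hp Hpc Hnn Hc. apply NNPP. intro Hn.
  assert (Inv : forall t, (t <= R0)%nat -> exists y, Zs (Nat.iter (R0 - t) W 0%nat) y /\
       phi y + INR t * eps <= phi p).
  { induction t as [|t IH]; intros Ht.
    - exists p. split. apply Hp. simpl. lra.
    - destruct (IH ltac:(lia)) as [y [Hy Hy2]].
      set (j := (R0 - S t)%nat).
      assert (Ej : (R0 - t)%nat = S j) by (unfold j; lia).
      rewrite Ej in Hy. simpl in Hy.
      assert (~ forall y', Zs (Nat.iter j W 0%nat) y' -> phi y <= phi y' + eps).
      { intro Hall. apply Hn. exists j. split. unfold j; lia. exists y. split; auto. }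
      apply not_all_ex_not in H. destruct H as [y' Hy'].
      apply imply_to_and in Hy'. destruct Hy' as [Z1 Z2].
      exists y'. split. exact Z1. rewrite S_INR. apply Rnot_le_lt in Z2. lra. }
  destruct (Inv R0 (le_n _)) as [y [_ Hy]]. specialize (Hnn y). lra.
Qed.

Ltac nat2R := repeat rewrite ?mult_INR, ?plus_INR, ?pow_INR, ?S_INR, ?INR_0.

Lemma INR_sub1 n : (1 <= n)%nat -> INR (n - 1) + 1 = INR n.
Proof. intros H. rewrite <- S_INR. f_equal. lia. Qed.

Lemma norm_scal_le {X : RHilbert} s (w : X) : 0 <= s -> hnorm (hscal s w) <= s * hnorm w.
Proof.
  intros Hs. apply norm_le. pose proof (hnorm_nonneg w). nra.
  rewrite hinner_scal_l, ip_scal_r, <- (hnorm_sq w). lra.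
Qed.

Lemma norm_self {X : RHilbert} (y : X) : hnorm (hsub y y) = 0.
Proof.
  unfold hnorm. replace (hinner (hsub y y) (hsub y y)) with 0 by hring. apply sqrt_0.
Qed.

Lemma norm_zero {X : RHilbert} : hnorm (@hzero X) = 0.
Proof. unfold hnorm. rewrite ip_zero_l. apply sqrt_0. Qed.

Lemma exp_mono_le u v : u <= v -> exp u <= exp v.
Proof. intros [H|H]; [left; apply exp_increasing; auto|subst; lra]. Qed.

Section Main.
Variables (X : RHilbert) (Aop : X -> X -> Prop) (J : R -> X -> X)
  (alpha beta : nat -> R) (e : nat -> X) (x0 : X) (x : nat -> X)
  (a Afn b B E : nat -> nat) (Dc Ec : nat) (p : X).
Hypothesis Hmax : maximal_monotone Aop.
Hypothesis HJ : is_resolvent Aop J.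
Hypothesis Hal : forall n, 0 < alpha n < 1.
Hypothesis Hbe : forall n, 0 < beta n.
Hypothesis Hx : HPPA J alpha beta e x0 x.
Hypothesis Ma : nat_monotone a.
Hypothesis MA : nat_monotone Afn.
Hypothesis Mb : nat_monotone b.
Hypothesis MB : nat_monotone B.
Hypothesis ME : nat_monotone E.
Hypothesis Q1 : forall k n, (a k <= n)%nat -> alpha n <= 1 / (INR k + 1).
Hypothesis Q2 : forall k, sum_f_R0 alpha (Afn k) >= INR k.
Hypothesis Q3' : forall n, beta n <= INR (b n).
Hypothesis Q3 : forall k n, (B k <= n)%nat -> beta n >= INR k.
Hypothesis Q4 : forall k n, rsum (fun i => hnorm (e i)) (E k + 1) n <= 1 / (INR k + 1).
Hypothesis HEc : INR Ec >= 1 + sum_f_R0 (fun i => hnorm (e i)) (E 0%nat).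
Hypothesis Hp : Aop p hzero.
Hypothesis HDc : INR Dc >= hnorm (hsub x0 p).

Let en i := hnorm (e i).
Let D := INR Dc.
Let Ee := INR Ec.
Let Nr := INR (Ncal Dc Ec).
Let y n := J (beta n) (x n).

Lemma Hmon : monotone_op Aop.
Proof. exact (proj1 Hmax). Qed.

Lemma en_nonneg : forall i, 0 <= en i.
Proof. intros; apply hnorm_nonneg. Qed.

Lemma Ee_ge1 : 1 <= Ee.
Proof.
  unfold Ee. rewrite sum_f_R0_rsum in HEc.
  pose proof (rsum_nonneg _ 0 (S (E 0%nat)) en_nonneg). unfold en in H. lra.
Qed.

Lemma Ec_ge1 : (1 <= Ec)%nat.
Proof. pose proof Ee_ge1. unfold Ee in H. apply INR_le. simpl. lra. Qed.

Lemma D_nonneg : 0 <= D.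
Proof. apply pos_INR. Qed.

Lemma N_ge : 2 * D <= Nr /\ D + Ee <= Nr.
Proof.
  unfold D, Ee, Nr, Ncal. split.
  - replace (2 * INR Dc) with (INR (2 * Dc)) by (nat2R; simpl; ring).
    apply le_INR, Nat.le_max_l.
  - rewrite <- plus_INR. apply le_INR, Nat.le_max_r.
Qed.

Lemma N_ge1 : 1 <= Nr.
Proof. pose proof N_ge. pose proof Ee_ge1. pose proof D_nonneg. lra. Qed.

Lemma err_total : forall n, rsum en 0 n <= Ee.
Proof.
  intros n. pose proof HEc as H. rewrite sum_f_R0_rsum in H. fold en in H. fold Ee in H.
  destruct (le_lt_dec n (S (E 0%nat))) as [h|h].
  - pose proof (rsum_mono_len en 0 n _ en_nonneg h). lra.
  - replace n with (S (E 0%nat) + (n - S (E 0%nat)))%nat by lia.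
    rewrite rsum_split. pose proof (Q4 0 (n - S (E 0%nat))). simpl INR in H0.
    replace (0 + S (E 0%nat))%nat with (E 0%nat + 1)%nat by lia. fold en in H0. lra.
Qed.

Lemma xstep n : x (S n) = hadd (hscal (alpha n) x0) (hscal (1 - alpha n) (hadd (y n) (e n))).
Proof. apply (proj2 Hx). Qed.

Lemma y_toward n : hnorm (hsub (y n) p) <= hnorm (hsub (x n) p).
Proof. apply (J_toward Aop J Hmon HJ); auto. Qed.

Lemma bounded_aux : forall n, hnorm (hsub (x n) p) <= D + rsum en 0 n.
Proof.
  induction n.
  - rewrite (proj1 Hx). simpl. unfold D. lra.
  - rewrite xstep. specialize (Hal n).
    pose proof (conv_norm (alpha n) x0 (hadd (y n) (e n)) p ltac:(lra)).
    pose proof (add_tri (y n) (e n) p). pose proof (y_toward n).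
    pose proof (rsum_nonneg en 0 n en_nonneg). simpl rsum. fold (en n) in *.
    pose proof (en_nonneg n). unfold D in *.
    assert ((1 - alpha n) * hnorm (hsub (hadd (y n) (e n)) p) <= (1 - alpha n) * (INR Dc + rsum en 0 n + en n))
      by (apply Rmult_le_compat_l; lra).
    nra.
Qed.

Lemma xbound n : hnorm (hsub (x n) p) <= D + Ee.
Proof. pose proof (bounded_aux n). pose proof (err_total n). lra. Qed.

Lemma ybound n : hnorm (hsub (y n) p) <= D + Ee.
Proof. pose proof (xbound n). pose proof (y_toward n). lra. Qed.

Lemma tail1 K i : (E K + 1 <= i)%nat -> en i <= 1 / (INR K + 1).
Proof.
  intros H. pose proof (Q4 K (i - E K)). fold en in H0.
  pose proof (rsum_single en (E K + 1) (i - E K) i en_nonneg ltac:(lia)). lra.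
Qed.

Lemma tail_sum K s n : (E K + 1 <= s)%nat -> rsum en s n <= 1 / (INR K + 1).
Proof.
  intros H. pose proof (rsum_shift_le en (E K + 1) s n en_nonneg H).
  pose proof (Q4 K (s - (E K + 1) + n)). fold en in H1. lra.
Qed.


Definition Zs K w := hnorm (hsub w (J 1 w)) <= / (INR K + 1) /\ hnorm (hsub w p) <= D + Ee.

Lemma Zs_anti K K' w : (K <= K')%nat -> Zs K' w -> Zs K w.
Proof.
  intros H [H1 H2]. split; auto. apply le_INR in H.
  pose proof (pos_INR K). eapply Rle_trans; [exact H1|].
  apply Rinv_le_contravar; lra.
Qed.

Lemma Zs_p K : Zs K p.
Proof.
  split.
  - pose proof (J_small Aop J Hmon HJ p hzero 1 Hp Rlt_0_1). rewrite norm_zero in H.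
    pose proof (pos_INR K). assert (0 < / (INR K + 1)) by (apply Rinv_0_lt_compat; lra). lra.
  - rewrite norm_self. pose proof D_nonneg. pose proof Ee_ge1. lra.
Qed.

Lemma azero K n : (chi1 a B E Dc Ec K <= n)%nat -> Zs K (x n).
Proof.
  intros Hn. unfold chi1, xi in Hn.
  destruct n as [|m]; [lia|].
  assert (Ha1 : (a (2 * (2 * Dc + Ec) * (4 * K + 3 + 1) - 1) <= m)%nat) by lia.
  assert (He1 : (E (2 * (4 * K + 3) + 1) + 1 <= m)%nat) by lia.
  assert (Hb1 : (B (8 * (Dc + Ec) * (K + 1) - 1) <= m)%nat) by lia.
  split; [|apply xbound].
  pose proof Ec_ge1 as Ec1.
  set (u := INR K + 1).
  assert (Hu : 1 <= u) by (unfold u; pose proof (pos_INR K); lra).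
  set (G := 2 * D + Ee). set (Hh := D + Ee).
  assert (HG : 1 <= G) by (unfold G; pose proof D_nonneg; pose proof Ee_ge1; lra).
  assert (HH : 1 <= Hh) by (unfold Hh; pose proof D_nonneg; pose proof Ee_ge1; lra).
  pose proof (Q1 _ _ Ha1) as A1.
  rewrite INR_sub1 in A1 by nia.
  replace (INR (2 * (2 * Dc + Ec) * (4 * K + 3 + 1))) with (8 * G * u) in A1
    by (unfold G, u, D, Ee; nat2R; simpl; ring).
  pose proof (tail1 _ _ He1) as E1.
  replace (INR (2 * (4 * K + 3) + 1) + 1) with (8 * u) in E1 by (unfold u; nat2R; simpl; ring).
  pose proof (Q3 _ _ Hb1) as B1.
  rewrite minus_INR in B1 by nia.
  replace (INR (8 * (Dc + Ec) * (K + 1))) with (8 * Hh * u) in B1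
    by (unfold Hh, u, D, Ee; nat2R; simpl; ring).
  simpl INR in B1.
  set (yy := y m).
  assert (T1 : hnorm (hsub (x (S m)) yy) <= alpha m * hnorm (hsub x0 yy) + en m).
  { rewrite xstep. fold yy. specialize (Hal m).
    pose proof (conv_norm (alpha m) x0 (hadd yy (e m)) yy ltac:(lra)).
    pose proof (add_tri yy (e m) yy). rewrite norm_self in H0. fold (en m) in *.
    pose proof (en_nonneg m).
    assert ((1 - alpha m) * hnorm (hsub (hadd yy (e m)) yy) <= en m) by nra. lra. }
  assert (T2 : hnorm (hsub x0 yy) <= G).
  { pose proof (hdist_tri x0 p yy). rewrite (hdist_sym p yy) in H. pose proof (ybound m).
    fold yy in H0. pose proof HDc. unfold G, D, Ee in *. lra. }
  assert (T3 : hnorm (hsub yy (J 1 yy)) <= / beta m * (2 * Hh)).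
  { pose proof (J_small Aop J Hmon HJ yy _ 1 (HJ (beta m) (x m) (Hbe m)) Rlt_0_1) as Z.
    fold (y m) yy in Z.
    assert (0 < / beta m) by (apply Rinv_0_lt_compat; apply Hbe).
    pose proof (norm_scal_le (/ beta m) (hsub (x m) yy) ltac:(lra)).
    pose proof (hdist_tri (x m) p yy). rewrite (hdist_sym p yy) in H1.
    pose proof (xbound m). pose proof (ybound m). fold yy in H3.
    assert (/ beta m * hnorm (hsub (x m) yy) <= / beta m * (2 * Hh)) by (apply Rmult_le_compat_l; unfold Hh; lra).
    lra. }
  assert (T4 : hnorm (hsub (x (S m)) (J 1 (x (S m)))) <=
     2 * hnorm (hsub (x (S m)) yy) + hnorm (hsub yy (J 1 yy))).
  { pose proof (hdist_tri (x (S m)) yy (J 1 (x (S m)))).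
    pose proof (hdist_tri yy (J 1 yy) (J 1 (x (S m)))).
    pose proof (J_nonexp Aop J Hmon HJ 1 yy (x (S m)) Rlt_0_1).
    rewrite (hdist_sym yy (x (S m))) in H1. lra. }
  assert (P1 : alpha m * hnorm (hsub x0 yy) <= / (8 * u)).
  { assert (0 <= alpha m) by (pose proof (Hal m); lra).
    assert (alpha m * hnorm (hsub x0 yy) <= alpha m * G) by (apply Rmult_le_compat_l; lra).
    assert (alpha m * G <= / (8 * u)).
    { unfold Rdiv in A1. rewrite Rmult_1_l in A1.
      apply Rmult_le_compat_r with (r := G) in A1; [|lra].
      replace (/ (8 * G * u) * G) with (/ (8 * u)) in A1 by (field; lra). lra. }
    lra. }
  assert (P2 : / beta m * (2 * Hh) <= / (2 * u)).
  { pose proof (Hbe m). assert (8 * Hh * u - 1 >= 4 * Hh * u) by nra.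
    assert (beta m >= 4 * Hh * u) by lra.
    apply (Rmult_le_reg_l (beta m)); auto.
    replace (beta m * (/ beta m * (2 * Hh))) with (2 * Hh) by (field; lra).
    apply (Rmult_le_reg_l (2 * u)). lra.
    replace (2 * u * (beta m * / (2 * u))) with (beta m) by (field; lra). nra. }
  unfold Rdiv in E1. rewrite Rmult_1_l in E1.
  assert (/ (8 * u) + / (8 * u) = / (4 * u)) by (field; lra).
  assert (2 * / (4 * u) + / (2 * u) = / u) by (field; lra).
  lra.
Qed.

Lemma chi1_mono : nat_monotone (chi1 a B E Dc Ec).
Proof.
  intros m n H. unfold chi1, xi. apply Nat.add_le_mono_r.
  apply Nat.max_le_compat; [apply Nat.max_le_compat; [apply Ma | apply Nat.add_le_mono_r; apply ME] | apply MB]; nia.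
Qed.

Lemma iter_mono (W : nat -> nat) : (forall m, (m <= W m)%nat) ->
  forall j R0, (j <= R0)%nat -> (Nat.iter j W 0%nat <= Nat.iter R0 W 0%nat)%nat.
Proof.
  intros HW j R0 H. induction H; auto. simpl. specialize (HW (Nat.iter m W 0%nat)). lia.
Qed.

Lemma Ncal_ge1 : (1 <= Ncal Dc Ec)%nat.
Proof. pose proof Ec_ge1. unfold Ncal. lia. Qed.

Definition phi w := hinner (hsub x0 w) (hsub x0 w).

Lemma zdist w z : Zs 0 w -> Zs 0 z -> hnorm (hsub w z) <= 2 * Nr.
Proof.
  intros [_ Hw] [_ Hz]. pose proof (hdist_tri w p z). rewrite (hdist_sym p z) in H.
  pose proof N_ge. lra.
Qed.

Lemma proj_prop (m q : nat) (eps kp : R) z :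
  q = (24 * Ncal Dc Ec * (m+1)^2)%nat -> 1 <= kp -> eps = / (8 * Nr^2 * kp^2) ->
  Zs q z -> (forall w, Zs m w -> phi z <= phi w + eps) ->
  forall w, Zs q w -> 2 * hinner (hsub x0 z) (hsub w z) <= 3 / (2 * kp).
Proof.
  intros Hq Hkp Heps Hz Hmin w Hw.
  pose proof N_ge1 as HN.
  set (lam := / (8 * Nr^2 * kp)).
  assert (Hl0 : 0 < lam) by (unfold lam; apply Rinv_0_lt_compat; nra).
  assert (Hl1 : lam <= 1).
  { unfold lam. rewrite <- Rinv_1. apply Rinv_le_contravar. lra. nra. }
  set (c := hadd (hscal lam w) (hscal (1 - lam) z)).
  assert (Hd : hnorm (hsub w z) <= 2 * Nr).
  { apply zdist; [apply (Zs_anti 0 q w); [lia|exact Hw] | apply (Zs_anti 0 q z); [lia|exact Hz]]. }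
  assert (Hc : Zs m c).
  { split.
    - pose proof (approx_conv Aop J Hmon HJ lam w z (/ (INR q + 1)) ltac:(lra) (proj1 Hw) (proj1 Hz)) as AC.
      simpl in AC. fold c in AC.
      set (t := INR m + 1).
      assert (Ht : 1 <= t) by (unfold t; pose proof (pos_INR m); lra).
      assert (Eq : INR q + 1 = 24 * Nr * (t * t) + 1) by (rewrite Hq; unfold t, Nr; nat2R; simpl; ring).
      rewrite Eq in AC.
      set (dl := / (24 * Nr * (t * t) + 1)) in *.
      assert (Hdl0 : 0 < dl) by (unfold dl; apply Rinv_0_lt_compat; nra).
      assert (Hdl1 : dl * (24 * Nr * (t * t) + 1) = 1) by (unfold dl; field; nra).
      apply norm_le. left. apply Rinv_0_lt_compat; lra.
      assert (dl * dl + dl * hnorm (hsub w z) <= 3 * Nr * dl).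
      { assert (0 <= 24 * Nr * (t * t)) by (apply Rmult_le_pos; nra).
        assert (dl <= 1) by nra.
        assert (dl * dl <= dl * Nr) by (apply Rmult_le_compat_l; lra).
        assert (dl * hnorm (hsub w z) <= dl * (2 * Nr)) by (apply Rmult_le_compat_l; lra).
        lra. }
      assert (3 * Nr * dl * (t * t) <= 1) by nra.
      assert (/ t * / t * (t * t) = 1) by (field; lra).
      assert (3 * Nr * dl <= / t * / t).
      { apply (Rmult_le_reg_r (t * t)). nra. lra. }
      lra.
    - pose proof (conv_norm lam w z p ltac:(lra)). fold c in H.
      destruct Hw as [_ Hw]. destruct Hz as [_ Hz].
      assert (lam * hnorm (hsub w p) + (1 - lam) * hnorm (hsub z p) <= D + Ee) by nra. lra. }
  specialize (Hmin c Hc). unfold phi in Hmin. unfold c in Hmin.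
  rewrite proj_ident in Hmin.
  rewrite <- (hnorm_sq (hsub w z)) in Hmin.
  set (P := hinner (hsub x0 z) (hsub w z)) in *.
  assert (2 * lam * P <= lam * lam * (hnorm (hsub w z) * hnorm (hsub w z)) + eps) by lra.
  assert (lam * lam * (hnorm (hsub w z) * hnorm (hsub w z)) <= lam * lam * (4 * Nr * Nr)).
  { apply Rmult_le_compat_l. nra. pose proof (hnorm_nonneg (hsub w z)). nra. }
  assert (E2 : lam * lam * (4 * Nr * Nr) + eps = lam * (3 / (2 * kp))).
  { rewrite Heps. unfold lam. field. nra. }
  assert (HH : lam * (2 * P) <= lam * (3 / (2 * kp))) by lra.
  apply Rmult_le_reg_l in HH; auto.
Qed.

Lemma zfix_lem z h M : Zs M z -> (Nat.max 2 (b h) * (h + 1) - 1 <= M)%nat ->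
  forall bt, 0 < bt -> bt <= INR (b h) -> hnorm (hsub z (J bt z)) <= / (INR h + 1).
Proof.
  intros [Hz _] HM bt Hbt Hbh.
  pose proof (J_beta1 Aop J Hmon HJ z bt Hbt).
  set (Mx := Nat.max 2 (b h)) in *.
  assert (HMx : 2 <= INR Mx /\ INR (b h) <= INR Mx).
  { split; [replace 2 with (INR 2) by (simpl; ring)|]; apply le_INR; unfold Mx; lia. }
  assert (E1 : INR (Mx * (h + 1) - 1) + 1 = INR Mx * (INR h + 1)).
  { rewrite INR_sub1 by (unfold Mx; nia). nat2R. simpl. ring. }
  apply le_INR in HM.
  assert (0 < INR h + 1) by (pose proof (pos_INR h); lra).
  assert (/ (INR M + 1) <= / (INR Mx * (INR h + 1))).
  { apply Rinv_le_contravar. nra. lra. }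
  assert (Rmax 1 bt <= INR Mx) by (apply Rmax_lub; lra).
  pose proof (hnorm_nonneg (hsub z (J 1 z))).
  assert (H5 : Rmax 1 bt * hnorm (hsub z (J 1 z)) <= INR Mx * / (INR Mx * (INR h + 1))).
  { apply Rmult_le_compat. pose proof (Rmax_l 1 bt); lra. auto. auto. lra. }
  replace (INR Mx * / (INR Mx * (INR h + 1))) with (/ (INR h + 1)) in H5 by (field; lra).
  lra.
Qed.

Lemma main_sec (k : nat) (f : nat -> nat) : nat_monotone f ->
  exists n : nat, (n <= Phi1 a Afn b B E Dc Ec k f)%nat /\
    forall i j : nat, (n <= i <= f n)%nat -> (n <= j <= f n)%nat ->
      hnorm (hsub (x i) (x j)) <= 1 / (INR k + 1).
Proof.
  intros Mf.
  pose proof N_ge1 as HN1. pose proof N_ge as HNg. pose proof D_nonneg as HD0.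
  pose proof Ee_ge1 as HE1. pose proof Ncal_ge1 as HNc.
  set (k' := (32 * (k + 1) ^ 2 - 1)%nat).
  set (R0 := (4 * Ncal Dc Ec ^ 4 * (k' + 1) ^ 2)%nat).
  set (u := hfun Afn E Dc Ec k f).
  set (W := wfun (nuhat a b B E Dc Ec u) (Ncal Dc Ec)).
  set (uk := INR k + 1).
  assert (Huk : 1 <= uk) by (unfold uk; pose proof (pos_INR k); lra).
  set (kp := INR k' + 1).
  assert (Hkp : kp = 32 * (uk * uk)).
  { unfold kp, k'. rewrite INR_sub1 by (cbn [Nat.pow]; nia). unfold uk. nat2R. simpl. ring. }
  set (eps := / (8 * Nr ^ 2 * kp ^ 2)).
  assert (Hkp1 : 1 <= kp) by nra.
  destruct (chain Zs phi W R0 eps (D * D) p Zs_p) as [j [Hj [z [Hz Hmin]]]].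
  { unfold phi. rewrite <- (hnorm_sq (hsub x0 p)). pose proof (hnorm_nonneg (hsub x0 p)).
    pose proof HDc. unfold D. nra. }
  { intros w. apply hinner_pos. }
  { assert (ER : INR R0 = 4 * Nr ^ 4 * kp ^ 2) by (unfold R0, kp, Nr; nat2R; simpl; ring).
    rewrite ER. unfold eps.
    replace (4 * Nr ^ 4 * kp ^ 2 * / (8 * Nr ^ 2 * kp ^ 2)) with (Nr * Nr / 2) by (field; nra).
    nra. }
  set (mj := Nat.iter j W 0%nat) in *.
  set (q := (24 * Ncal Dc Ec * (mj + 1) ^ 2)%nat).
  set (nstar := chi1 a B E Dc Ec q).
  set (h := u nstar).
  assert (HWm : W mj = Nat.max (nu b u nstar) q) by reflexivity.
  rewrite HWm in Hz.
  assert (Hzq : Zs q z) by (eapply Zs_anti; [|exact Hz]; lia).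
  assert (Hproj := proj_prop mj q eps kp z eq_refl Hkp1 ltac:(unfold eps; reflexivity) Hzq Hmin).
  assert (Hfix : forall bt, 0 < bt -> bt <= INR (b h) -> hnorm (hsub z (J bt z)) <= / (INR h + 1)).
  { apply (zfix_lem z h _ Hz). unfold nu. fold h. lia. }
  set (nprime := gfun E Dc Ec k nstar).
  set (n := sigma1 Afn Dc Ec (ktilde k) nprime).
  exists n. split.
  { unfold Phi1. unfold n, sigma1. apply Nat.add_le_mono_r. apply MA. apply Nat.add_le_mono_r.
    unfold nprime, gfun. apply Nat.max_le_compat_r.
    unfold nstar, Delta, Psi. cbv zeta. apply chi1_mono.
    assert (mj <= Nat.iter R0 W 0%nat)%nat.
    { apply iter_mono; [|lia]. intros m0. unfold W, wfun. assert (m0 <= 24 * Ncal Dc Ec * (m0+1)^2)%nat by (cbn [Nat.pow]; nia). lia. }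
    fold u. fold R0 W. unfold q. apply Nat.mul_le_mono_l. apply Nat.pow_le_mono_l. apply Nat.add_le_mono_r. exact H. }

  set (F := f n).
  assert (Hh : h = ((1 + 4 * Ncal Dc Ec) * (16 * (k + 1) ^ 2 * (F + 1) + 1) - 1)%nat) by reflexivity.
  assert (HhR : INR h + 1 = (1 + 4 * Nr) * (16 * (uk * uk) * (INR F + 1) + 1)).
  { rewrite Hh, INR_sub1 by (cbn [Nat.pow]; nia). unfold Nr, uk. nat2R. simpl. ring. }
  assert (HFh : (F <= h)%nat) by (rewrite Hh; cbn [Nat.pow]; nia).
  set (Ke := (16 * (1 + 4 * Ncal Dc Ec) * (k + 1) ^ 2 - 1)%nat).
  assert (HKe : INR Ke + 1 = 16 * (1 + 4 * Nr) * (uk * uk)).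
  { unfold Ke. rewrite INR_sub1 by (cbn [Nat.pow]; nia). unfold Nr, uk. nat2R. simpl. ring. }
  assert (Hnp1 : (nstar <= nprime)%nat) by (unfold nprime, gfun; lia).
  assert (Hnp2 : (E Ke + 1 <= nprime)%nat) by (unfold nprime, gfun, Ke; lia).
  set (L := ceil_nat (ln (16 * INR (Ncal Dc Ec) ^ 2 * INR (ktilde k + 1)))).
  assert (Hn : n = (Afn (nprime + L) + 1)%nat) by reflexivity.
  assert (Hal01 : forall i, 0 <= alpha i <= 1) by (intros i; pose proof (Hal i); lra).
  assert (HQ2 := Q2 (nprime + L)). rewrite sum_f_R0_rsum in HQ2.
  assert (Hrs1 : rsum alpha 0 (S (Afn (nprime + L))) <= INR (S (Afn (nprime + L)))).
  { pose proof (rsum_le alpha (fun _ => 1) 0 (S (Afn (nprime + L))) ltac:(intros; apply Hal01)).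
    rewrite rsum_const in H. lra. }
  assert (HnpL : (nprime + L <= n)%nat).
  { apply INR_le. rewrite Hn. replace (Afn (nprime + L) + 1)%nat with (S (Afn (nprime + L))) by lia. lra. }
  assert (Hs : forall M, (n <= M <= F)%nat -> hnorm (hsub (x M) z) <= / (2 * uk)).
  { intros M HM.
    set (sq := fun i => hinner (hsub (x i) z) (hsub (x i) z)).
    set (r := 3 / (2 * kp)).
    set (gm := fun i => (1 + 4 * Nr) * (/ (INR h + 1) + en i)).
    assert (Hr : 0 <= r) by (unfold r; apply Rmult_le_pos; [lra|]; left; apply Rinv_0_lt_compat; lra).
    assert (HhR0 : 0 < INR h + 1) by (pose proof (pos_INR h); lra).
    assert (Hgm : forall i, 0 <= gm i).
    { intros i. unfold gm. apply Rmult_le_pos. lra. pose proof (en_nonneg i).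
      assert (0 < / (INR h + 1)) by (apply Rinv_0_lt_compat; lra). lra. }
    assert (Hstep : forall i, (nprime <= i < nprime + (M - nprime))%nat ->
        sq (S i) <= (1 - alpha i) * sq i + alpha i * r + gm i).
    { intros i Hi.
      assert (Hih : (i <= h)%nat) by lia.
      assert (HZ : Zs q (x (S i))) by (apply azero; fold nstar; lia).
      pose proof (Hproj (x (S i)) HZ) as HP. fold r in HP.
      unfold sq. rewrite xstep in HP |- *.
      set (v := hadd (y i) (e i)) in *.
      pose proof (xu_step (alpha i) x0 v z (Hal01 i)) as XS.
      assert (Hv : hnorm (hsub v z) <= hnorm (hsub (x i) z) + (/ (INR h + 1) + en i)).
      { pose proof (add_tri (y i) (e i) z) as V1. fold v in V1. fold (en i) in V1.
        pose proof (hdist_tri (y i) (J (beta i) z) z) as V2.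
        pose proof (J_nonexp Aop J Hmon HJ (beta i) (x i) z (Hbe i)) as V3.
        change (J (beta i) (x i)) with (y i) in V3.
        rewrite (hdist_sym (J (beta i) z) z) in V2.
        assert (V4 := Hfix (beta i) (Hbe i) ltac:(pose proof (Q3' i); pose proof (le_INR _ _ (Mb _ _ Hih)); lra)).
        lra. }
      assert (Hxz : hnorm (hsub (x i) z) <= 2 * Nr).
      { pose proof (hdist_tri (x i) p z) as V1. rewrite (hdist_sym p z) in V1.
        pose proof (xbound i). pose proof (proj2 Hz). lra. }
      assert (Hrho : / (INR h + 1) + en i <= 1).
      { pose proof (tail1 Ke i ltac:(lia)) as V1. rewrite HKe in V1.
        assert (16 * (1 + 4 * Nr) * (uk * uk) >= 2) by nra.
        assert (1 / (16 * (1 + 4 * Nr) * (uk * uk)) <= / 2).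
        { unfold Rdiv. rewrite Rmult_1_l. apply Rinv_le_contravar; lra. }
        assert (INR h + 1 >= 2).
        { rewrite HhR. pose proof (pos_INR F). nra. }
        assert (/ (INR h + 1) <= / 2) by (apply Rinv_le_contravar; lra).
        lra. }
      set (rho := / (INR h + 1) + en i) in *.
      assert (Hrho0 : 0 <= rho).
      { unfold rho. pose proof (en_nonneg i). assert (0 < / (INR h + 1)) by (apply Rinv_0_lt_compat; lra). lra. }
      set (t := hnorm (hsub (x i) z)) in *.
      assert (Ht0 : 0 <= t) by apply hnorm_nonneg.
      assert (HV : hinner (hsub v z) (hsub v z) <= t * t + rho * (4 * Nr + 1)).
      { rewrite <- hnorm_sq. pose proof (hnorm_nonneg (hsub v z)).
        assert (hnorm (hsub v z) * hnorm (hsub v z) <= (t + rho) * (t + rho)) by nra.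
        nra. }
      rewrite <- (hnorm_sq (hsub (x i) z)). fold t.
      unfold gm. fold rho.
      pose proof (Hal01 i) as A01.
      pose proof (hinner_pos X (hsub v z)) as V0.
      assert ((1 - alpha i) * (1 - alpha i) * hinner (hsub v z) (hsub v z)
              <= (1 - alpha i) * hinner (hsub v z) (hsub v z)).
      { assert (0 <= (1 - alpha i) * hinner (hsub v z) (hsub v z)) by nra. nra. }
      assert ((1 - alpha i) * hinner (hsub v z) (hsub v z) <= (1 - alpha i) * (t * t + rho * (4 * Nr + 1)))
        by (apply Rmult_le_compat_l; lra).
      assert ((1 - alpha i) * (rho * (4 * Nr + 1)) <= (1 + 4 * Nr) * rho) by (assert (0 <= rho * (4 * Nr + 1)) by (apply Rmult_le_pos; lra); nra).
      assert (2 * alpha i * hinner (hsub x0 z) (hsub (hadd (hscal (alpha i) x0) (hscal (1 - alpha i) v)) z)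
              <= alpha i * r) by nra.
      nra. }
    pose proof (xu_lemma sq alpha gm r nprime (M - nprime) Hal01 Hr Hgm Hstep) as XU.
    replace (nprime + (M - nprime))%nat with M in XU by lia.
    set (w := / (uk * uk)).
    assert (Hw0 : 0 < w) by (unfold w; apply Rinv_0_lt_compat; nra).
    destruct (rprod_exp alpha nprime (M - nprime) Hal01) as [Pi0 Pi1].
    set (Pi := rprod (fun i => 1 - alpha i) nprime (M - nprime)) in *.
    assert (Hsa : INR L <= rsum alpha nprime (M - nprime)).
    { assert (C1 : rsum alpha 0 (S (Afn (nprime + L))) <= rsum alpha 0 M).
      { apply rsum_mono_len. intros; apply Hal01. rewrite Hn in HM. lia. }
      assert (C2 : rsum alpha 0 M = rsum alpha 0 nprime + rsum alpha nprime (M - nprime)).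
      { replace M with (nprime + (M - nprime))%nat at 1 by lia. rewrite rsum_split. reflexivity. }
      assert (C3 : rsum alpha 0 nprime <= INR nprime).
      { pose proof (rsum_le alpha (fun _ => 1) 0 nprime ltac:(intros; apply Hal01)).
        rewrite rsum_const in H. lra. }
      rewrite plus_INR in HQ2. lra. }
    set (Q := 16 * INR (Ncal Dc Ec) ^ 2 * INR (ktilde k + 1)).
    assert (HQ : Q = 64 * (Nr * Nr) * (uk * uk)).
    { unfold Q, ktilde. rewrite plus_INR, INR_sub1 by (cbn [Nat.pow]; nia).
      unfold Nr, uk. nat2R. simpl. ring. }
    assert (HQ0 : 0 < Q) by (rewrite HQ; nra).
    assert (HL : ln Q <= INR L) by apply ceil_nat_ge.
    assert (HPi : Pi <= / Q).
    { eapply Rle_trans; [exact Pi1|].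
      replace (/ Q) with (exp (- ln Q)) by (rewrite exp_Ropp, exp_ln; auto). apply exp_mono_le. lra. }
    assert (Hsq0 : sq nprime <= 4 * (Nr * Nr)).
    { unfold sq. rewrite <- hnorm_sq.
      pose proof (hdist_tri (x nprime) p z) as V1. rewrite (hdist_sym p z) in V1.
      pose proof (xbound nprime). pose proof (proj2 Hz). pose proof (hnorm_nonneg (hsub (x nprime) z)).
      assert (hnorm (hsub (x nprime) z) <= 2 * Nr) by lra. nra. }
    assert (T1 : Pi * sq nprime <= w / 16).
    { assert (0 <= sq nprime) by apply hinner_pos.
      assert (Pi * sq nprime <= / Q * (4 * (Nr * Nr))) by (apply Rmult_le_compat; lra).
      replace (/ Q * (4 * (Nr * Nr))) with (w / 16) in H0 by (rewrite HQ; unfold w; field; nra).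
      lra. }
    assert (T2 : r = 3 * w / 64) by (unfold r, w; rewrite Hkp; field; nra).
    assert (T3 : rsum gm nprime (M - nprime) <= w / 8).
    { unfold gm. rewrite rsum_lin.
      pose proof (tail_sum Ke nprime (M - nprime) Hnp2) as V1. rewrite HKe in V1.
      assert (V2 : INR (M - nprime) <= INR F + 1).
      { pose proof (le_INR (M - nprime) F ltac:(lia)). lra. }
      assert (V3 : INR (M - nprime) * / (INR h + 1) <= (INR F + 1) * / (INR h + 1)).
      { apply Rmult_le_compat_r; [left; apply Rinv_0_lt_compat|]; lra. }
      assert (V4 : (1 + 4 * Nr) * ((INR F + 1) * / (INR h + 1)) <= w / 16).
      { rewrite HhR. unfold w. pose proof (pos_INR F).
        apply (Rmult_le_reg_r (16 * (uk * uk) * (INR F + 1) + 1)). nra.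
        replace ((1 + 4 * Nr) * ((INR F + 1) * / ((1 + 4 * Nr) * (16 * (uk * uk) * (INR F + 1) + 1))) *
                 (16 * (uk * uk) * (INR F + 1) + 1)) with (INR F + 1) by (field; nra).
        replace (/ (uk * uk) / 16 * (16 * (uk * uk) * (INR F + 1) + 1)) with
                (INR F + 1 + / (uk * uk) / 16) by (field; nra).
        assert (0 < / (uk * uk) / 16) by (apply Rmult_lt_0_compat; [apply Rinv_0_lt_compat; nra|lra]).
        lra. }
      assert (V5 : (1 + 4 * Nr) * rsum en nprime (M - nprime) <= w / 16).
      { assert ((1 + 4 * Nr) * rsum en nprime (M - nprime) <= (1 + 4 * Nr) * (1 / (16 * (1 + 4 * Nr) * (uk * uk))))
          by (apply Rmult_le_compat_l; lra).
        replace ((1 + 4 * Nr) * (1 / (16 * (1 + 4 * Nr) * (uk * uk)))) with (w / 16) in H by (unfold w; field; nra).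
        lra. }
      assert ((1 + 4 * Nr) * (INR (M - nprime) * / (INR h + 1)) <= (1 + 4 * Nr) * ((INR F + 1) * / (INR h + 1)))
        by (apply Rmult_le_compat_l; lra).
      lra. }
    apply norm_le. left. apply Rinv_0_lt_compat; lra.
    replace (/ (2 * uk) * / (2 * uk)) with (w / 4) by (unfold w; field; lra).
    fold (sq M). lra. }
  intros i j0 Hi Hj0. fold F in Hi, Hj0.
  pose proof (Hs i Hi) as G1. pose proof (Hs j0 Hj0) as G2.
  pose proof (hdist_tri (x i) z (x j0)) as G3. rewrite (hdist_sym z (x j0)) in G3.
  replace (1 / uk) with (/ (2 * uk) + / (2 * uk)) by (field; lra). lra.
Qed.

End Main.

Theorem mainTheorem13
  (X : RHilbert) (Aop : X -> X -> Prop) (J : R -> X -> X)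
  (alpha beta : nat -> R) (e : nat -> X) (x0 : X) (x : nat -> X)
  (a Afn b B E : nat -> nat) (Dc Ec : nat) (p : X) :
  maximal_monotone Aop ->
  is_resolvent Aop J ->
  (forall n, 0 < alpha n < 1) ->
  (forall n, 0 < beta n) ->
  HPPA J alpha beta e x0 x ->
  nat_monotone a -> nat_monotone Afn -> nat_monotone b ->
  nat_monotone B -> nat_monotone E ->
  (forall k n, (a k <= n)%nat -> alpha n <= 1 / (INR k + 1)) ->
  (forall k, sum_f_R0 alpha (Afn k) >= INR k) ->
  (forall n, beta n <= INR (b n)) ->
  (forall k n, (B k <= n)%nat -> beta n >= INR k) ->
  (forall k n, rsum (fun i => hnorm (e i)) (E k + 1) n <= 1 / (INR k + 1)) ->
  INR Ec >= 1 + sum_f_R0 (fun i => hnorm (e i)) (E 0%nat) ->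
  Aop p hzero ->
  INR Dc >= hnorm (hsub x0 p) ->
  forall (k : nat) (f : nat -> nat), nat_monotone f ->
  exists n : nat, (n <= Phi1 a Afn b B E Dc Ec k f)%nat /\
    forall i j : nat, (n <= i <= f n)%nat -> (n <= j <= f n)%nat ->
      hnorm (hsub (x i) (x j)) <= 1 / (INR k + 1).
Proof.
  intros. eapply main_sec; eauto.
Qed.
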